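(* For any feasible solution $(f,x_1^*,\dots,x_n^* )$ of the reward-design problem, there exists a feasible solution $(f,x_1',\dots,x_n')$ (with the same $f$) such that $x_1'\le x_2'\le\cdots\le x_n'$ and $\sum_{i=1}^n x_i'\ge\sum_{i=1}^n x_i^*$.
   Context: There are $n$ agents with types $0<q_1\le q_2\le\cdots\le q_n$, a cost constant $C>0$ and a budget $B>0$. A reward function is a map $f:[0,\infty)\to[0,\infty)$; agent $i$'s utility for producing quality $x$ is $u_i(x)=f(x)-xC/q_i$. A tuple $(f,x_1^*,\dots,x_n^* )$ is a feasible solution of the reward-design problem if for each $i$: $0\le x_i^*\le q_i$ and $u_i(x_i^* )\ge u_i(x)$ for all $x\in[0,q_i]$, and moreover $\sum_{i=1}^n f(x_i^* )\le B$. The objective is to maximize $\sum_i x_i^*$. *)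

(* Defs.v *)
From Stdlib Require Import Reals.
Open Scope R_scope.

Definition utility (C : R) (f : R -> R) (qi x : R) : R := f x - x * C / qi.

Fixpoint sumR (n : nat) (a : nat -> R) : R :=
  match n with
  | O => 0
  | S m => sumR m a + a m
  end.

Definition feasible (n : nat) (q : nat -> R) (C B : R) (f : R -> R) (x : nat -> R) : Prop :=
  (forall i, (i < n)%nat ->
     0 <= x i <= q i /\
     forall y, 0 <= y <= q i -> utility C f (q i) (x i) >= utility C f (q i) y) /\
  sumR n (fun i => f (x i)) <= B.

(* Main.v *)
Require Import Defs.
From Stdlib Require Import Reals Lra Lia Psatz Arith.
Open Scope R_scope.

Lemma sumR_ext (N : nat) (a b : nat -> R) :
  (forall k, (k < N)%nat -> a k = b k) -> sumR N a = sumR N b.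
Proof.
  induction N; simpl; intros H; [reflexivity|].
  rewrite IHN by (intros; apply H; lia). rewrite H by lia. reflexivity.
Qed.

Lemma sumR_upd (N : nat) (h : nat -> R) (a : nat) (v : R) :
  (a < N)%nat ->
  sumR N (fun k => if Nat.eqb k a then v else h k) = sumR N h + v - h a.
Proof.
  induction N; intros Ha; [lia|]. simpl.
  destruct (Nat.eqb_spec N a) as [E|E].
  - subst a. rewrite (sumR_ext N _ h).
    + lra.
    + intros k Hk. destruct (Nat.eqb_spec k N); [lia|reflexivity].
  - rewrite IHN by lia. lra.
Qed.

Lemma sumR_swap (N : nat) (h : nat -> R) (a b : nat) :
  a <> b -> (a < N)%nat -> (b < N)%nat ->
  sumR N (fun k => if Nat.eqb k a then h b else if Nat.eqb k b then h a else h k)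
  = sumR N h.
Proof.
  intros Hab Ha Hb.
  rewrite (sumR_upd N (fun k => if Nat.eqb k b then h a else h k) a (h b) Ha).
  rewrite (sumR_upd N h b (h a) Hb).
  destruct (Nat.eqb_spec a b); [lia|]. lra.
Qed.

Definition opt (q : nat -> R) (C : R) (f : R -> R) (i : nat) (v : R) : Prop :=
  0 <= v <= q i /\ forall y, 0 <= y <= q i -> utility C f (q i) v >= utility C f (q i) y.

Lemma swap_q (q : nat -> R) C f i j a b :
  0 < C -> 0 < q i -> 0 < q j -> q i <= q j -> opt q C f i a -> opt q C f j b -> b < a ->
  q i = q j.
Proof.
  intros HC Hi Hj Hij [[Ha0 Ha1] Ha] [[Hb0 Hb1] Hb] Hba.
  destruct (Req_dec (q i) (q j)) as [E|E]; [exact E|exfalso].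
  assert (Hlt : q i < q j) by lra.
  specialize (Ha b ltac:(lra)). specialize (Hb a ltac:(lra)).
  unfold utility in *.
  assert (Hu : C / q j < C / q i).
  { unfold Rdiv. apply Rmult_lt_compat_l; [lra|]. apply Rinv_lt_contravar; nra. }
  replace (a * C / q i) with (a * (C / q i)) in Ha by (field; lra).
  replace (b * C / q i) with (b * (C / q i)) in Ha by (field; lra).
  replace (a * C / q j) with (a * (C / q j)) in Hb by (field; lra).
  replace (b * C / q j) with (b * (C / q j)) in Hb by (field; lra).
  set (u := C / q i) in *. set (w := C / q j) in *.
  nra.
Qed.

Section S.
Variables (n : nat) (q : nat -> R) (C : R) (f : R -> R).
Hypothesis hq_pos : forall i, (i < n)%nat -> 0 < q i.
Hypothesis hq_sorted : forall i j, (i <= j < n)%nat -> q i <= q j.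
Hypothesis hC : 0 < C.

Definition Good (x : nat -> R) := forall k, (k < n)%nat -> opt q C f k (x k).

Lemma insert (m : nat) : forall x, (m < n)%nat -> Good x ->
  (forall i j, (i <= j < m)%nat -> x i <= x j) ->
  exists x', Good x' /\ (forall i j, (i <= j <= m)%nat -> x' i <= x' j) /\
    (forall k, (m < k)%nat -> x' k = x k) /\
    sumR n x' = sumR n x /\ sumR n (fun k => f (x' k)) = sumR n (fun k => f (x k)) /\
    (forall b, (forall k, (k <= m)%nat -> x k <= b) -> forall k, (k <= m)%nat -> x' k <= b).
Proof.
  induction m as [|m' IH]; intros x Hm Hg Hs.
  - exists x. split; [exact Hg|]. split.
    { intros i j Hij. assert (i = j) by lia. subst; lra. }
    split; [intros; reflexivity|]. split; [reflexivity|]. split; [reflexivity|].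
    auto.
  - destruct (Rle_dec (x m') (x (S m'))) as [Hle|Hgt].
    + exists x. split; [exact Hg|]. split.
      2:{ split; [intros; reflexivity|]. split; [reflexivity|]. split; [reflexivity|]. auto. }
      intros i j Hij. destruct (Nat.eq_dec j (S m')) as [->|Hj].
      * destruct (Nat.eq_dec i (S m')) as [->|Hi]; [lra|].
        apply Rle_trans with (x m'); [apply Hs; lia|exact Hle].
      * apply Hs; lia.
    + set (m := S m') in *.
      set (y := fun k => if Nat.eqb k m' then x m else if Nat.eqb k m then x m' else x k).
      assert (Hq : q m' = q m).
      { apply (swap_q q C f m' m (x m') (x m)).
        exact hC. apply hq_pos; lia. apply hq_pos; lia.
        apply hq_sorted; lia. apply Hg; lia. apply Hg; lia. lra. }
      assert (Hgy : Good y).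
      { intros k Hk. unfold y.
        destruct (Nat.eqb_spec k m'); [subst k; unfold opt; rewrite Hq; apply Hg; lia|].
        destruct (Nat.eqb_spec k m); [subst k; unfold opt; rewrite <- Hq; apply Hg; lia|].
        apply Hg; lia. }
      assert (Hsy : forall i j, (i <= j < m')%nat -> y i <= y j).
      { intros i j Hij. unfold y.
        destruct (Nat.eqb_spec i m'); [lia|]. destruct (Nat.eqb_spec i m); [lia|].
        destruct (Nat.eqb_spec j m'); [lia|]. destruct (Nat.eqb_spec j m); [lia|].
        apply Hs; lia. }
      destruct (IH y ltac:(lia) Hgy Hsy) as (z & Hgz & Hsz & Hez & Hsum1 & Hsum2 & Hbz).
      assert (Hzm : z m = x m').
      { rewrite Hez by lia. unfold y. destruct (Nat.eqb_spec m m'); [lia|].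
        rewrite Nat.eqb_refl. reflexivity. }
      assert (Hyb : forall b, (forall k, (k <= m)%nat -> x k <= b) ->
                 forall k, (k <= m')%nat -> y k <= b).
      { intros b Hb k Hk. unfold y.
        destruct (Nat.eqb_spec k m'); [apply Hb; lia|].
        destruct (Nat.eqb_spec k m); [lia|]. apply Hb; lia. }
      exists z. split; [exact Hgz|]. split.
      { intros i j Hij. destruct (Nat.eq_dec j m) as [->|Hj].
        - rewrite Hzm. destruct (Nat.eq_dec i m) as [->|Hi]; [lra|].
          apply (Hbz (x m')); [|lia].
          intros k Hk. unfold y.
          destruct (Nat.eqb_spec k m'); [lra|].
          destruct (Nat.eqb_spec k m); [lia|]. apply Hs; lia.
        - apply Hsz; lia. }
      split.
      { intros k Hk. rewrite Hez by lia. unfold y.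
        destruct (Nat.eqb_spec k m'); [lia|]. destruct (Nat.eqb_spec k m); [lia|].
        reflexivity. }
      split.
      { rewrite Hsum1. unfold y. apply sumR_swap; lia. }
      split.
      { rewrite Hsum2. unfold y.
        rewrite <- (sumR_swap n (fun k => f (x k)) m' m) by lia.
        apply sumR_ext. intros k Hk.
        destruct (Nat.eqb_spec k m'); [reflexivity|].
        destruct (Nat.eqb_spec k m); reflexivity. }
      intros b Hb k Hk. destruct (Nat.eq_dec k m) as [->|Hk'].
      * rewrite Hzm. apply Hb; lia.
      * apply (Hbz b (Hyb b Hb)); lia.
Qed.

Lemma sort_upto (m : nat) : forall x, (m <= n)%nat -> Good x ->
  exists x', Good x' /\ (forall i j, (i <= j < m)%nat -> x' i <= x' j) /\
    sumR n x' = sumR n x /\ sumR n (fun k => f (x' k)) = sumR n (fun k => f (x k)).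
Proof.
  induction m as [|m IH]; intros x Hm Hg.
  - exists x. split; [exact Hg|]. split; [intros; lia|]. split; reflexivity.
  - destruct (IH x ltac:(lia) Hg) as (y & Hgy & Hsy & H1 & H2).
    destruct (insert m y ltac:(lia) Hgy Hsy) as (z & Hgz & Hsz & _ & H3 & H4 & _).
    exists z. split; [exact Hgz|]. split; [intros i j Hij; apply Hsz; lia|].
    split; congruence.
Qed.
End S.

Theorem lemma1 (n : nat) (q : nat -> R) (C B : R)
  (hq_pos : forall i, (i < n)%nat -> 0 < q i)
  (hq_sorted : forall i j, (i <= j < n)%nat -> q i <= q j)
  (hC : 0 < C) (hB : 0 < B)
  (f : R -> R) (hf : forall x, 0 <= x -> 0 <= f x)
  (xs : nat -> R) (hfeas : feasible n q C B f xs) :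
  exists x' : nat -> R,
    feasible n q C B f x' /\
    (forall i j, (i <= j < n)%nat -> x' i <= x' j) /\
    sumR n x' >= sumR n xs.
Proof.
  destruct hfeas as [Hopt Hbud].
  destruct (sort_upto n q C f hq_pos hq_sorted hC n xs (le_n n) Hopt)
    as (x' & Hg & Hs & H1 & H2).
  exists x'. split; [split|split].
  - exact Hg.
  - rewrite H2. exact Hbud.
  - exact Hs.
  - rewrite H1. lra.
Qed.
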